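(* Let $x$ be a sequence of length $n$, let $i\in\{1,\ldots,n-1\}$, $y=\tau(x,i)$, and let $r,\ell$ be as defined in the context. Let $R=\{i+2,\ldots,i+r-1\}$ and $L=\{i-\ell+1,\ldots,i-1\}$. (1) If $x[i]<x[i+1]$: (a) for every $j\in R$, $\overrightarrow{PD}_y[j]\in\{\overrightarrow{PD}_x[j],\overrightarrow{PD}_x[j]-1\}$; (b) for every $j\in L$, $\overleftarrow{PD}_y[j]\in\{\overleftarrow{PD}_x[j],\overleftarrow{PD}_x[j]+1\}$. (2) If $x[i]>x[i+1]$: (a) for every $j\in R$, $\overrightarrow{PD}_y[j]\in\{\overrightarrow{PD}_x[j],\overrightarrow{PD}_x[j]+1\}$; (b) for every $j\in L$, $\overleftarrow{PD}_y[j]\in\{\overleftarrow{PD}_x[j],\overleftarrow{PD}_x[j]-1\}$.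
   Context: Sequences are finite sequences of pairwise distinct integers indexed from $1$. For $1\le i\le n-1$, $\tau(x,i)$ is obtained from $x$ by exchanging $x[i]$ and $x[i+1]$. The parent-distance table of $x$ is $\overrightarrow{PD}_x[k]=k-\max\{j<k : x[j]<x[k]\}$ if such $j$ exists and $0$ otherwise; the reverse parent-distance table is $\overleftarrow{PD}_x[k]=\min\{j : k<j\le n,\ x[j]<x[k]\}-k$ if such $j$ exists and $0$ otherwise. Notation: $\overrightarrow{a_x}=\overrightarrow{PD}_x[i]$, $\overrightarrow{b_x}=\overrightarrow{PD}_x[i+1]$, $\overleftarrow{a_x}=\overleftarrow{PD}_x[i+1]$, $\overleftarrow{b_x}=\overleftarrow{PD}_x[i]$. Define $r=\overleftarrow{b_x}$ if $x[i]<x[i+1]$ and $\overleftarrow{b_x}>1$; $r=\overleftarrow{a_x}+1$ if $x[i]>x[i+1]$ and $\overleftarrow{a_x}>0$; $r=n-i+1$ otherwise. Define $\ell=\overrightarrow{a_x}$ if $x[i]<x[i+1]$ and $\overrightarrow{a_x}>0$; $\ell=\overrightarrow{b_x}-1$ if $x[i]>x[i+1]$ and $\overrightarrow{b_x}>1$; $\ell=i$ otherwise. Index ranges $\{a,\ldots,b\}$ with $a>b$ are empty. *)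

(* Defs.v *)
From mathcomp Require Import all_boot all_order all_algebra.
Set Implicit Arguments. Unset Strict Implicit. Unset Printing Implicit Defensive.
Import Order.TTheory GRing.Theory Num.Theory.

(* Sequences of pairwise distinct integers, indexed from 1:
   x[k] := nth 0 x (k-1), for 1 <= k <= size x. *)
Definition at1 (x : seq int) (k : nat) : int := nth 0%R x k.-1.

(* tau(x,i): exchange x[i] and x[i+1] (1-indexed). *)
Definition tau (x : seq int) (i : nat) : seq int :=
  set_nth 0%R (set_nth 0%R x i.-1 (at1 x i.+1)) i (at1 x i).

(* Forward parent distance: k - max{ j < k : x[j] < x[k] } (j >= 1), or 0. *)
Definition fpd (x : seq int) (k : nat) : nat :=
  let s := [seq j <- iota 1 k.-1 | (at1 x j < at1 x k)%R] in
  if s is [::] then 0 else k - last 0 s.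

(* Reverse parent distance: min{ j : k < j <= n, x[j] < x[k] } - k, or 0. *)
Definition rpd (x : seq int) (k : nat) : nat :=
  let s := [seq j <- iota k.+1 (size x - k) | (at1 x j < at1 x k)%R] in
  if s is j :: _ then j - k else 0.

Definition r_of (x : seq int) (i : nat) : nat :=
  let n := size x in
  if (at1 x i < at1 x i.+1)%R && (1 < rpd x i) then rpd x i
  else if (at1 x i.+1 < at1 x i)%R && (0 < rpd x i.+1) then (rpd x i.+1).+1
  else n - i + 1.

Definition l_of (x : seq int) (i : nat) : nat :=
  if (at1 x i < at1 x i.+1)%R && (0 < fpd x i) then fpd x i
  else if (at1 x i.+1 < at1 x i)%R && (1 < fpd x i.+1) then (fpd x i.+1).-1
  else i.

(* Main.v *)
Require Import Defs.
From mathcomp Require Import all_boot all_order all_algebra zify.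
Import Order.TTheory GRing.Theory Num.Theory.
Set Implicit Arguments. Unset Strict Implicit.


Lemma size_tau (x : seq int) i : 1 <= i -> i < size x -> size (tau x i) = size x.
Proof. move=> h1 h2; rewrite /tau !size_set_nth; lia. Qed.

Lemma tau_i (x : seq int) i : 1 <= i -> i < size x -> at1 (tau x i) i = at1 x i.+1.
Proof.
move=> h1 h2; rewrite /at1 /tau nth_set_nth /= ifN; last by apply/eqP; lia.
by rewrite nth_set_nth /= eqxx /at1.
Qed.

Lemma tau_i1 (x : seq int) i : 1 <= i -> i < size x -> at1 (tau x i) i.+1 = at1 x i.
Proof. move=> h1 h2; rewrite /at1 /tau !nth_set_nth /= eqxx //. Qed.

Lemma tau_o (x : seq int) i k : 1 <= k -> k != i -> k != i.+1 -> at1 (tau x i) k = at1 x k.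
Proof.
move=> h1 h2 h3; rewrite /at1 /tau nth_set_nth /= ifN; last by apply/eqP; lia.
rewrite nth_set_nth /= ifN //; apply/eqP; lia.
Qed.

Lemma filt_head (P : pred nat) a n j t m :
  filter P (iota a n) = j :: t -> (a <= m < j)%N -> ~~ P m.
Proof.
elim: n a => [|n IH] a //= .
case: ifP => Pa.
  by case=> <- _; lia.
move=> h hm; case: (m =P a) => [->|ne]; first by rewrite Pa.
apply: (IH a.+1 h); lia.
Qed.

Lemma filt_nil (P : pred nat) l m : filter P l = [::] -> m \in l -> ~~ P m.
Proof. by move=> h ml; apply/negP => Pm; have := mem_filter P m l; rewrite h Pm ml. Qed.

Lemma filt_last (P : pred nat) a n m0 :
  filter P (iota a n) != [::] -> last 0%N (filter P (iota a n)) = m0 ->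
  [/\ P m0, (a <= m0 < a + n)%N & forall m, (m0 < m < a + n)%N -> ~~ P m].
Proof.
elim: n m0 => [|n IH] m0; first by [].
rewrite -addn1 iotaD filter_cat /=.
case: ifP => Pn.
  move=> _; rewrite last_cat /= => <-; split => //; lia.
rewrite cats0 => ne hl; have [h1 h2 h3] := IH m0 ne hl.
split => //; first lia.
move=> m hm; case: (m =P a + n)%N => [->|ne']; first by rewrite Pn.
apply: h3; lia.
Qed.

Lemma fpd_spec (x : seq int) k :
  (fpd x k = 0 /\ forall m, 1 <= m < k -> ~~ (at1 x m < at1 x k)%R) \/
  (0 < fpd x k /\ (at1 x (k - fpd x k) < at1 x k)%R /\ 1 <= k - fpd x k < k /\
     forall m, k - fpd x k < m < k -> ~~ (at1 x m < at1 x k)%R).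
Proof.
rewrite /fpd.
case E: (filter _ _) => [|a t].
  left; split => // m hm; apply: (filt_nil E); rewrite mem_iota; lia.
right.
have ne : filter (fun j => (at1 x j < at1 x k)%R) (iota 1 k.-1) != [::] by rewrite E.
have [h1 h2 h3] := filt_last ne erefl.
rewrite E in h1 h2 h3.
have e : k - (k - last 0 (a :: t)) = last 0 (a :: t) by lia.
rewrite e; split; first lia. split => //; split; first lia.
move=> m hm; apply: h3; lia.
Qed.

Lemma rpd_spec (x : seq int) k :
  (rpd x k = 0 /\ forall m, k < m <= size x -> ~~ (at1 x m < at1 x k)%R) \/
  (0 < rpd x k /\ (at1 x (k + rpd x k) < at1 x k)%R /\ k + rpd x k <= size x /\
     forall m, k < m < k + rpd x k -> ~~ (at1 x m < at1 x k)%R).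
Proof.
rewrite /rpd.
case E: (filter _ _) => [|a t].
  left; split => // m hm; apply: (filt_nil E); rewrite mem_iota; lia.
right.
have am : a \in filter (fun j => (at1 x j < at1 x k)%R) (iota k.+1 (size x - k)) by rewrite E inE eqxx.
rewrite mem_filter mem_iota in am; case/andP: am => Pa ra.
have e : k + (a - k) = a by lia.
rewrite e; split; first lia. split => //; split; first lia.
move=> m hm; apply: (filt_head E); lia.
Qed.

Lemma fpd_swap (x : seq int) i j : 1 <= i -> i < size x -> i.+2 <= j ->
  let a := (at1 x i < at1 x j)%R in let b := (at1 x i.+1 < at1 x j)%R in
  (a = b -> fpd (tau x i) j = fpd x j) /\
  (a -> ~~ b -> fpd (tau x i) j = fpd x j \/ fpd (tau x i) j = (fpd x j).-1) /\
  (~~ a -> b -> fpd (tau x i) j = fpd x j \/ fpd (tau x i) j = (fpd x j).+1).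
Proof.
move=> h1 h2 h3 a b.
have hi : iota 1 j.-1 = iota 1 i.-1 ++ [:: i; i.+1] ++ iota i.+2 (j - i.+2).
  have -> : j.-1 = i.-1 + (2 + (j - i.+2)) by lia.
  rewrite !iotaD; have -> : 1 + i.-1 = i by lia.
  by rewrite addn2.
have yj : at1 (tau x i) j = at1 x j by apply: tau_o; lia.
rewrite /fpd hi !filter_cat yj.
have -> : [seq j0 <- iota 1 i.-1 | (at1 (tau x i) j0 < at1 x j)%R] =
          [seq j0 <- iota 1 i.-1 | (at1 x j0 < at1 x j)%R].
  apply: eq_in_filter => m; rewrite mem_iota => hm; rewrite tau_o //; apply/eqP; lia.
have -> : [seq j0 <- iota i.+2 (j - i.+2) | (at1 (tau x i) j0 < at1 x j)%R] =
          [seq j0 <- iota i.+2 (j - i.+2) | (at1 x j0 < at1 x j)%R].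
  apply: eq_in_filter => m; rewrite mem_iota => hm; rewrite tau_o //; apply/eqP; lia.
rewrite /= tau_i // tau_i1 // -/a -/b.
move: (filter _ (iota 1 _)) (filter _ (iota i.+2 _)) => A B.
case: a; case: b => /=; (split; [by [] | split; move=> // _ _]).
- case: B => [|c B]; last by left; case: A => [|d A] //=; rewrite !last_cat.
  right; case: A => [|d A] /=; first lia.
  rewrite !last_cat /=; lia.
- case: B => [|c B]; last by left; case: A => [|d A] //=; rewrite !last_cat.
  right; case: A => [|d A] /=; first lia.
  rewrite !last_cat /=; lia.
Qed.

Lemma rpd_swap (x : seq int) i j : 1 <= i -> i < size x -> 1 <= j -> j < i ->
  let a := (at1 x i < at1 x j)%R in let b := (at1 x i.+1 < at1 x j)%R in
  (a = b -> rpd (tau x i) j = rpd x j) /\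
  (a -> ~~ b -> rpd (tau x i) j = rpd x j \/ rpd (tau x i) j = (rpd x j).+1) /\
  (~~ a -> b -> rpd (tau x i) j = rpd x j \/ rpd (tau x i) j = (rpd x j).-1).
Proof.
move=> h1 h2 h0 h3 a b.
have hi : iota j.+1 (size x - j) = iota j.+1 (i - j.+1) ++ [:: i; i.+1] ++ iota i.+2 (size x - i.+1).
  have -> : size x - j = (i - j.+1) + (2 + (size x - i.+1)) by lia.
  rewrite !iotaD; have -> : j.+1 + (i - j.+1) = i by lia.
  by rewrite addn2.
have yj : at1 (tau x i) j = at1 x j by apply: tau_o; lia.
rewrite /rpd size_tau // hi !filter_cat yj.
have -> : [seq j0 <- iota j.+1 (i - j.+1) | (at1 (tau x i) j0 < at1 x j)%R] =
          [seq j0 <- iota j.+1 (i - j.+1) | (at1 x j0 < at1 x j)%R].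
  apply: eq_in_filter => m; rewrite mem_iota => hm; rewrite tau_o //; first lia; apply/eqP; lia.
have -> : [seq j0 <- iota i.+2 (size x - i.+1) | (at1 (tau x i) j0 < at1 x j)%R] =
          [seq j0 <- iota i.+2 (size x - i.+1) | (at1 x j0 < at1 x j)%R].
  apply: eq_in_filter => m; rewrite mem_iota => hm; rewrite tau_o //; first lia; apply/eqP; lia.
rewrite /= tau_i // tau_i1 // -/a -/b.
move: (filter _ (iota j.+1 _)) (filter _ (iota i.+2 _)) => A B.
case: a; case: b => /=; (split; [by [] | split; move=> // _ _]).
- case: A => [|c A] /=; last by left.
  right; lia.
- case: A => [|c A] /=; last by left.
  right; lia.
Qed.

Lemma at1_neq (x : seq int) p q : uniq x -> 1 <= p <= size x -> 1 <= q <= size x ->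
  p != q -> at1 x p != at1 x q.
Proof.
move=> U /andP[hp1 hp2] /andP[hq1 hq2] ne; rewrite /at1 nth_uniq //.
- apply/eqP; move/eqP: ne => ne e; apply: ne; have {e} e : (p.-1 = q.-1)%N := e.
  change (p = q :> nat); lia.
- by rewrite prednK.
- by rewrite prednK.
Qed.

Lemma nlt_lt (u v : int) : ~~ (u < v)%R -> u != v -> (v < u)%R.
Proof. by move=> h ne; rewrite lt_neqAle eq_sym ne leNgt. Qed.

Theorem lemma5 (x : seq int) (i : nat) :
  uniq x -> 1 <= i -> i <= (size x).-1 ->
  let y := tau x i in
  let r := r_of x i in
  let l := l_of x i in
  ((at1 x i < at1 x i.+1)%R ->
     (forall j, i + 2 <= j <= i + r - 1 ->
        fpd y j = fpd x j \/ fpd y j = (fpd x j).-1) /\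
     (forall j, i - l + 1 <= j <= i - 1 ->
        rpd y j = rpd x j \/ rpd y j = (rpd x j).+1)) /\
  ((at1 x i.+1 < at1 x i)%R ->
     (forall j, i + 2 <= j <= i + r - 1 ->
        fpd y j = fpd x j \/ fpd y j = (fpd x j).+1) /\
     (forall j, i - l + 1 <= j <= i - 1 ->
        rpd y j = rpd x j \/ rpd y j = (rpd x j).-1)).
Proof.
move=> U h1 h2' y r l.
have h2 : i < size x by lia.
split => Hlt.
- have Hlt' : (at1 x i.+1 < at1 x i)%R = false by apply/negbTE; rewrite -leNgt ltW.
  split.
  + move=> j hj.
    have hj' : j <= size x /\ ~~ (at1 x j < at1 x i)%R.
      move: hj; rewrite /r /r_of Hlt Hlt' /=.
      case: ifP => hr hj.
        case: (rpd_spec x i) => [[e _]|[p [_ [q H]]]]; first by rewrite e in hr.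
        split; first lia. apply: H; lia.
      case: (rpd_spec x i) => [[e H]|[p [q _]]].
        split; first lia. apply: H; lia.
      have e1 : rpd x i = 1 by move/negbT: hr; lia.
      by rewrite e1 addn1 Hlt' in q.
    case: hj' => hjn hn.
    have a : (at1 x i < at1 x j)%R.
      apply: nlt_lt hn _; rewrite eq_sym; apply: at1_neq => //; lia.
    have [F1 [F2 _]] := fpd_swap (j := j) h1 h2 (ltac:(lia)).
    case b: (at1 x i.+1 < at1 x j)%R.
      by left; apply: F1; rewrite a b.
    by apply: F2 => //; rewrite b.
  + move=> j hj.
    have hn : ~~ (at1 x j < at1 x i)%R.
      move: hj; rewrite /l /l_of Hlt Hlt' /=.
      case: ifP => hr hj.
        case: (fpd_spec x i) => [[e _]|[p [_ [q H]]]]; first by rewrite e in hr.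
        apply: H; lia.
      case: (fpd_spec x i) => [[e H]|[p _]]; last by rewrite p in hr.
      apply: H; lia.
    have a : (at1 x i < at1 x j)%R.
      apply: nlt_lt hn _; rewrite eq_sym; apply: at1_neq => //; lia.
    have [F1 [F2 _]] := rpd_swap (j := j) h1 h2 (ltac:(lia)) (ltac:(lia)).
    case b: (at1 x i.+1 < at1 x j)%R.
      by left; apply: F1; rewrite a b.
    by apply: F2 => //; rewrite b.
- have Hlt' : (at1 x i < at1 x i.+1)%R = false by apply/negbTE; rewrite -leNgt ltW.
  split.
  + move=> j hj.
    have hj' : j <= size x /\ ~~ (at1 x j < at1 x i.+1)%R.
      move: hj; rewrite /r /r_of Hlt Hlt' /=.
      case: ifP => hr hj.
        case: (rpd_spec x i.+1) => [[e _]|[p [_ [q H]]]]; first by rewrite e in hr.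
        split; first lia. apply: H; lia.
      case: (rpd_spec x i.+1) => [[e H]|[p _]]; last by rewrite p in hr.
      split; first lia. apply: H; lia.
    case: hj' => hjn hn.
    have b : (at1 x i.+1 < at1 x j)%R.
      apply: nlt_lt hn _; rewrite eq_sym; apply: at1_neq => //; lia.
    have [F1 [_ F3]] := fpd_swap (j := j) h1 h2 (ltac:(lia)).
    case a: (at1 x i < at1 x j)%R.
      by left; apply: F1; rewrite a b.
    by apply: F3 => //; rewrite a.
  + move=> j hj.
    have hn : ~~ (at1 x j < at1 x i.+1)%R.
      move: hj; rewrite /l /l_of Hlt Hlt' /=.
      case: ifP => hr hj.
        case: (fpd_spec x i.+1) => [[e _]|[p [_ [q H]]]]; first by rewrite e in hr.
        apply: H; lia.
      case: (fpd_spec x i.+1) => [[e H]|[p [q _]]].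
        apply: H; lia.
      have e1 : fpd x i.+1 = 1 by move/negbT: hr; lia.
      by rewrite e1 subn1 /= Hlt' in q.
    have b : (at1 x i.+1 < at1 x j)%R.
      apply: nlt_lt hn _; rewrite eq_sym; apply: at1_neq => //; lia.
    have [F1 [_ F3]] := rpd_swap (j := j) h1 h2 (ltac:(lia)) (ltac:(lia)).
    case a: (at1 x i < at1 x j)%R.
      by left; apply: F1; rewrite a b.
    by apply: F3 => //; rewrite a.
Qed.
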